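(* Let $\widehat{\Gamma}$ be a Harnack graph with controlled, uniformly lazy weights $(\pi,\mu)$, $K$ a set of vertices, $\Gamma:=\widehat\Gamma\setminus K$, and $V_{\partial\Gamma}(x,r)=\pi(B_{\widehat\Gamma}(x,r)\cap\partial\Gamma)$. Assume in addition that $V_{\partial\Gamma}$ is doubling: there is $D>0$ with $V_{\partial\Gamma}(z,2r)\le D\,V_{\partial\Gamma}(z,r)$ for all $z\in\partial\Gamma$, $r>0$. For $x\in\Gamma$ let $v_x\in\partial\Gamma$ be a point achieving $d(x,K)$, set $d_x:=d(x,K)$ and $\widetilde W(x,r):=V_{\widehat\Gamma}(x,r)/V_{\partial\Gamma}(v_x,r)$. Then there is a constant $C$ such that \[\psi_K(x)\le\sum_{n\ge d_x^2}\frac{C}{\widetilde W(x,\sqrt n)}\qquad\text{for all }x\in\Gamma\setminus\partial_I\Gamma.\]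
   Context: $\widehat{\Gamma}=(\widehat V,\widehat E)$ is an infinite simple connected graph with symmetric edge weights $\mu_{xy}=\mu_{yx}$, $\mu_{xy}\ne0$ iff $x\sim y$, vertex weights $\pi>0$ with $\sum_{y\sim x}\mu_{xy}\le\pi(x)$; Markov kernel $\mathcal{K}(x,y)=\mu_{xy}/\pi(x)$ ($x\neq y$), $\mathcal{K}(x,x)=1-\sum_{z\sim x}\mu_{xz}/\pi(x)$. Controlled weights: $\exists C_c>1$ with $\mu_{xy}/\pi(x)\ge1/C_c$ for all $y\sim x$. Uniformly lazy: $\exists C_e\in(0,1)$ with $\mathcal{K}(x,x)\ge C_e$. $d$ is graph distance, $B_{\widehat\Gamma}(x,r)=\{y:d(x,y)\le r\}$, $V_{\widehat\Gamma}(x,r)=\pi(B_{\widehat\Gamma}(x,r))$. Heat kernel $p(n,x,y)=\mathcal{K}^n(x,y)/\pi(y)$; Harnack graph means two-sided Gaussian bounds $\frac{c_1}{V(x,\sqrt n)}e^{-d(x,y)^2/(c_2n)}\le p(n,x,y)\le\frac{c_3}{V(x,\sqrt n)}e^{-d(x,y)^2/(c_4 n)}$ for all $x,y$, $n\ge d(x,y)$. $\Gamma$ is the induced subgraph on $\widehat V\setminus K$; $\partial\Gamma$ = vertices outside $\Gamma$ adjacent to $\Gamma$; $\partial_I\Gamma$ = vertices of $\Gamma$ adjacent to a vertex outside $\Gamma$. $\psi_K(x)=\mathbb{P}^x(\tau_K<\infty)$, $\tau_K=\min\{n\ge0:X_n\in K\}$. *)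

(* Defs.v *)
From HB Require Import structures.
From mathcomp Require Import all_boot all_order all_algebra.
From mathcomp Require Import all_classical all_reals all_analysis.
Set Implicit Arguments. Unset Strict Implicit. Unset Printing Implicit Defensive.
Import Order.TTheory GRing.Theory Num.Theory.
Local Open Scope ring_scope.
Local Open Scope classical_set_scope.

(* A (locally finite) graph on vertex type V is given by its neighbour lists:
   y ~ x  iff  y \in nbrs x. *)
Section Graph.
Variables (R : realType) (V : choiceType) (nbrs : V -> seq V).
Variables (mu : V -> V -> R) (pi : V -> R).

Definition adj (x y : V) : bool := y \in nbrs x.

Definition simple_graph : Prop :=
  (forall x, uniq (nbrs x)) /\ (forall x, ~~ adj x x) /\
  (forall x y, adj x y = adj y x).

Definition walk (x y : V) (n : nat) : Prop :=
  exists p : seq V, [/\ path adj x p, last x p = y & size p = n].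

Definition connected_graph : Prop := forall x y, exists n, walk x y n.

(* graph distance (0 if no walk exists, irrelevant under connectedness) *)
Definition dist (x y : V) : nat :=
  match pselect (exists n, `[< walk x y n >]) with
  | left h => ex_minn h
  | right _ => 0%N
  end.

Definition ball_g (x : V) (r : R) : set V := [set y | (dist x y)%:R <= r].

(* V(x,r) = pi(B(x,r)); the ball is finite for a locally finite graph *)
Definition vol (x : V) (r : R) : R := (\sum_(y \in ball_g x r) pi y)%R.

Definition weights_ok : Prop :=
  (forall x y, mu x y = mu y x) /\
  (forall x y, mu x y != 0 <-> adj x y) /\
  (forall x, 0 < pi x) /\
  (forall x, \sum_(y <- nbrs x) mu x y <= pi x).

Definition kern (x y : V) : R :=
  if y == x then 1 - \sum_(z <- nbrs x) mu x z / pi x else mu x y / pi x.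

Definition controlled : Prop :=
  exists Cc : R, 1 < Cc /\ forall x y, adj x y -> 1 / Cc <= mu x y / pi x.

Definition uniformly_lazy : Prop :=
  exists Ce : R, 0 < Ce < 1 /\ forall x, Ce <= kern x x.

(* n-step kernel K^n(x,y); the chain from x only moves to x or neighbours *)
Fixpoint kern_pow (n : nat) (x y : V) : R :=
  match n with
  | 0 => (x == y)%:R
  | n'.+1 => \sum_(z <- x :: nbrs x) kern x z * kern_pow n' z y
  end.

Definition heat (n : nat) (x y : V) : R := kern_pow n x y / pi y.

(* two-sided Gaussian bounds (Harnack graph) *)
Definition harnack : Prop :=
  exists c1 c2 c3 c4 : R, [/\ 0 < c1, 0 < c2, 0 < c3 & 0 < c4] /\
  forall (n : nat) x y, (dist x y <= n)%N ->
    c1 / vol x (Num.sqrt n%:R) * expR (- ((dist x y)%:R ^+ 2) / (c2 * n%:R))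
      <= heat n x y /\
    heat n x y <=
      c3 / vol x (Num.sqrt n%:R) * expR (- ((dist x y)%:R ^+ 2) / (c4 * n%:R)).

Variable K : set V.

Definition in_Gamma (x : V) : Prop := ~ K x.
Definition bdry (z : V) : Prop := K z /\ exists y, adj z y /\ ~ K y.
Definition inner_bdry (x : V) : Prop := ~ K x /\ exists y, adj x y /\ K y.

Definition vol_bdry (x : V) (r : R) : R :=
  (\sum_(y \in ball_g x r `&` bdry) pi y)%R.

(* P^x(tau_K <= n), by first-step analysis of the chain with kernel kern *)
Fixpoint hit_by (n : nat) (x : V) : R :=
  if `[< K x >] then 1 else
  match n with
  | 0 => 0
  | n'.+1 => \sum_(z <- x :: nbrs x) kern x z * hit_by n' z
  end.

(* psi_K(x) = P^x(tau_K < oo) = sup_n P^x(tau_K <= n) (increasing limit) *)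
Definition psiK (x : V) : R := sup [set hit_by n x | n in [set: nat]].

Definition Wtilde (x v : V) (r : R) : R := vol x r / vol_bdry v r.

End Graph.

(* Main.v *)
Require Import Defs.
From HB Require Import structures.
From mathcomp Require Import all_boot all_order all_algebra.
From mathcomp Require Import all_classical all_reals all_analysis.
From mathcomp Require Import ring lra.
Import Order.TTheory GRing.Theory Num.Theory.
Local Open Scope ring_scope.
Local Open Scope classical_set_scope.
Set Implicit Arguments. Unset Strict Implicit. Unset Printing Implicit Defensive.

Section G1.
Variables (V : choiceType) (nbrs : V -> seq V).
Local Notation adj := (adj nbrs).
Local Notation walk := (walk nbrs).
Local Notation dist := (dist nbrs).

Lemma dist_le x y l : walk x y l -> (dist x y <= l)%N.
Proof.
move=> w; rewrite /dist; case: pselect => [h|nh]; last first.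
  by exfalso; apply: nh; exists l; apply/asboolP.
by case: ex_minnP => m _ /(_ l); apply; apply/asboolP.
Qed.

Lemma dist_walk x y : (exists n, walk x y n) -> walk x y (dist x y).
Proof.
move=> [n w]; rewrite /dist; case: pselect => [h|nh]; last first.
  by exfalso; apply: nh; exists n; apply/asboolP.
by case: ex_minnP => m /asboolP.
Qed.

Lemma walk_cat x y z a b : walk x y a -> walk y z b -> walk x z (a + b).
Proof.
move=> [p [p1 p2 p3]] [q [q1 q2 q3]]; exists (p ++ q); split.
- by rewrite cat_path p1 p2 q1.
- by rewrite last_cat p2.
- by rewrite size_cat p3 q3.
Qed.

Lemma walk_rev x y a : (forall u w, adj u w = adj w u) -> walk x y a -> walk y x a.
Proof.
move=> sym [p [p1 p2 p3]]; exists (rev (belast x p)); split.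
- rewrite -p2 rev_path; apply: sub_path p1 => u w /=; by rewrite sym.
- case: p p1 p2 p3 => [|z p] //= _ <- _; rewrite rev_cons last_rcons //.
- by rewrite size_rev size_belast.
Qed.

Lemma walk0 x : walk x x 0.
Proof. by exists [::]. Qed.

Lemma dist_xx x : dist x x = 0%N.
Proof. by apply/eqP; rewrite -leqn0; apply: dist_le; apply: walk0. Qed.

Hypothesis sym : forall u w, adj u w = adj w u.
Hypothesis conn : forall x y, exists n, walk x y n.

Lemma dist_sym x y : dist x y = dist y x.
Proof.
apply/eqP; rewrite eqn_leq; apply/andP; split; apply: dist_le; apply: walk_rev => //;
 exact: dist_walk.
Qed.

Lemma dist_tri x y z : (dist x z <= dist x y + dist y z)%N.
Proof. by apply: dist_le; apply: walk_cat; apply: dist_walk. Qed.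

Fixpoint reach (n : nat) (v : V) : seq V :=
  if n is n'.+1 then flatten [seq reach n' z | z <- v :: nbrs v] else [:: v].

Lemma reach_walk n v w : w \in reach n v -> exists2 l, (l <= n)%N & walk v w l.
Proof.
elim: n v => [|n IH] v.
  by rewrite inE => /eqP ->; exists 0%N => //; apply: walk0.
move=> /flatten_mapP [z]; rewrite inE => /orP [/eqP -> | zn] /IH [l ln wl].
  by exists l => //; apply: leqW.
exists l.+1 => //; case: wl => p [p1 p2 p3]; exists (z :: p); split => //=.
  by rewrite p1 andbT.
by rewrite p3.
Qed.

Lemma reach_self n v : v \in reach n v.
Proof.
elim: n v => [|n IH] v; first by rewrite inE.
by apply/flatten_mapP; exists v; rewrite ?inE ?eqxx.
Qed.

Lemma reach_mono n v w : w \in reach n v -> w \in reach n.+1 v.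
Proof.
elim: n v => [|n IH] v.
  by rewrite inE => /eqP ->; apply: reach_self.
move=> /flatten_mapP [z zin] /IH h; apply/flatten_mapP; exists z => //.
Qed.

Lemma reach_monoW n m v w : (n <= m)%N -> w \in reach n v -> w \in reach m v.
Proof.
move=> /subnK <-; elim: (m - n)%N => [|k IH] //= h.
by apply: reach_mono; apply: IH.
Qed.

Lemma walk_reach l v w : walk v w l -> w \in reach l v.
Proof.
move=> [p [p1 p2 p3]]; elim: p l v p1 p2 p3 => [|z p IH] l v.
  by move=> _ <- <-; rewrite inE.
rewrite /= => /andP [vz pz] lw <-; apply/flatten_mapP; exists z.
  by rewrite inE; apply/orP; right; exact: vz.
by apply: IH.
Qed.

Lemma dist_reach k v w : (dist v w <= k)%N -> w \in reach k v.
Proof.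
move=> h; apply: reach_monoW h _; apply: walk_reach; exact: dist_walk.
Qed.

Lemma reach_dist n v w : w \in reach n v -> (dist v w <= n)%N.
Proof. by move=> /reach_walk [l ln /dist_le h]; apply: leq_trans h ln. Qed.

End G1.
Section G2.
Variables (R : realType) (V : choiceType) (nbrs : V -> seq V).
Variables (mu : V -> V -> R) (pi : V -> R) (K : set V).
Local Notation kern := (kern nbrs mu pi).
Local Notation kp := (kern_pow nbrs mu pi).
Hypothesis Hk0 : forall x y, 0 <= kern x y.
Hypothesis Hnl : forall x, x \notin nbrs x.
Hypothesis sym : forall u w, adj nbrs u w = adj nbrs w u.


Lemma kern_row x : \sum_(z <- x :: nbrs x) kern x z = 1.
Proof.
rewrite big_cons.
have -> : kern x x = 1 - \sum_(z <- nbrs x) mu x z / pi x by rewrite /Defs.kern eqxx.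
rewrite [X in _ + X](eq_big_seq (fun z => mu x z / pi x)); first by rewrite subrK.
move=> z zn; rewrite /Defs.kern ifF //; apply/negbTE; apply: contraNneq (Hnl x) => zx.
by move: zn; rewrite zx.
Qed.

Lemma kp_ge0 n x y : 0 <= kp n x y.
Proof.
elim: n x => [|n IH] x /=; first by rewrite ler0n.
by apply: sumr_ge0 => z _; apply: mulr_ge0.
Qed.

Lemma sum_eq1 (L : seq V) x (F : V -> R) : uniq L ->
  \sum_(y <- L) (x == y)%:R * F y = if x \in L then F x else 0.
Proof.
elim: L => [|a L IH] /=; first by rewrite big_nil.
move=> /andP [aL uL]; rewrite big_cons IH // inE.
case: (eqVneq x a) => [->|xa]; rewrite ?mul1r ?mul0r ?add0r //=.
by rewrite (negbTE aL) addr0.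
Qed.

Lemma kp_sum_le1 n x (L : seq V) : uniq L -> \sum_(y <- L) kp n x y <= 1.
Proof.
move=> uL; elim: n x => [|n IH] x /=.
  rewrite (eq_bigr (fun y => (x == y)%:R * 1)); last by move=> *; rewrite mulr1.
  by rewrite sum_eq1 //; case: ifP.
rewrite exchange_big /= -(kern_row x); apply: ler_sum => z _.
rewrite -mulr_sumr; rewrite -[X in _ <= X]mulr1; apply: ler_wpM2l => //.
Qed.

Lemma kp_self (Ce : R) n x : 0 <= Ce -> Ce <= kern x x -> Ce ^+ n <= kp n x x.
Proof.
move=> C0 Cx; elim: n => [|n IH] /=; first by rewrite eqxx.
rewrite big_cons exprS -[X in X <= _]addr0; apply: lerD.
  by apply: ler_pM => //; apply: exprn_ge0.
by apply: sumr_ge0 => z _; apply: mulr_ge0 => //; apply: kp_ge0.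
Qed.

Lemma kp_reach n x w : w \notin reach nbrs n x -> kp n x w = 0.
Proof.
elim: n x => [|n IH] x.
  by rewrite inE eq_sym /= => /negbTE ->.
move=> h /=; rewrite big1_seq // => z /= zin; rewrite IH ?mulr0 //.
apply: contra h => wz; apply/flatten_mapP; exists z => //.
Qed.

Variable B : V -> bool.

Fixpoint fb (n : nat) (y : V) : R :=
  if n is n'.+1 then \sum_(z <- y :: nbrs y) kern y z * fb n' z else (B y)%:R.

Lemma fb_ge0 n y : 0 <= fb n y.
Proof.
elim: n y => [|n IH] y /=; first by rewrite ler0n.
by apply: sumr_ge0 => z _; apply: mulr_ge0.
Qed.

Lemma fb_eq n y (L : seq V) : uniq L -> (forall w, w \in reach nbrs n y -> w \in L) ->
  fb n y = \sum_(w <- L) kp n y w * (B w)%:R.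
Proof.
move=> uL; elim: n y => [|n IH] y sub /=.
  by rewrite sum_eq1 // (sub y (reach_self _ _ _)).
rewrite (eq_big_seq (fun z => \sum_(w <- L) kern y z * (kp n z w * (B w)%:R))).
  rewrite exchange_big /=; apply: eq_bigr => w _; rewrite mulr_suml.
  by apply: eq_bigr => z _; rewrite mulrA.
move=> z zin; rewrite (IH z) ?mulr_sumr // => w wz; apply: sub.
by apply/flatten_mapP; exists z.
Qed.

Lemma hit_fb m y : (B = fun z => `[< bdry nbrs K z >]) -> (K y -> bdry nbrs K y) ->
  hit_by nbrs mu pi K m y <= \sum_(n < m.+1) fb n y.
Proof.
move=> BE; elim: m y => [|m IH] y Ky.
  rewrite big_ord_recl big_ord0 addr0 /=.
  case: ifPn => [/asboolP Ky'|_]; last by rewrite ler0n.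
  by rewrite BE asboolT //; apply: Ky.
rewrite /=; case: ifPn => [/asboolP Ky'|/asboolP nK].
  rewrite big_ord_recl /= -[X in X <= _]addr0; apply: lerD.
    by rewrite BE asboolT //; apply: Ky.
  by apply: sumr_ge0 => i _; exact: (fb_ge0 i.+1 y).
rewrite big_ord_recl /= -[X in X <= _]add0r; apply: lerD; first by exact: (fb_ge0 0 y).
rewrite (@le_trans _ _ (\sum_(z <- y :: nbrs y) kern y z * \sum_(n < m.+1) fb n z)) //.
  rewrite big_seq [X in _ <= X]big_seq; apply: ler_sum => z zin; apply: ler_wpM2l => //; apply: IH => Kz.
  move: zin; rewrite inE => /orP [/eqP zy|zn]; first by rewrite zy in Kz.
  split => //; exists y; split => //; rewrite sym; exact: zn.
rewrite le_eqVlt; apply/orP; left; apply/eqP.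
rewrite (eq_bigr (fun z => \sum_(n < m.+1) kern y z * fb n z)); last first.
  by move=> z _; rewrite mulr_sumr.
rewrite exchange_big /=; apply: eq_bigr => i _.
by rewrite add0n.
Qed.

End G2.
Section G3.
Variables (R : realType) (T : choiceType).

Lemma fs_repr (A : set T) (F : T -> R) : exists s : seq T,
  [/\ uniq s, (forall y, y \in s -> A y) & \sum_(i \in A) F i = \sum_(i <- s) F i].
Proof.
case: finite_supportP => [_|X XA _ _]; first by exists [::].
exists (finmap.enum_fset X); split => //; try exact: finmap.fset_uniq.
all: by move=> y yX; apply: XA.
Qed.

Lemma fs_ge0 (A : set T) (F : T -> R) : (forall i, 0 <= F i) -> 0 <= \sum_(i \in A) F i.
Proof.
move=> F0; have [s [_ _ ->]] := fs_repr A F; exact: sumr_ge0.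
Qed.

Lemma fs_lower (A : set T) (F : T -> R) (S : seq T) (P : pred T) :
  finite_set A -> (forall i, 0 <= F i) -> uniq S -> (forall w, w \in S -> P w -> A w) ->
  \sum_(w <- S | P w) F w <= \sum_(i \in A) F i.
Proof.
move=> fA F0 uS SA; rewrite fsbig_finite //.
set Tl := finmap.enum_fset (fset_set A).
rewrite -(big_filter S); set S' := [seq x <- S | P x].
have uS' : uniq S' by apply: filter_uniq.
have -> : \sum_(w <- S') F w = \sum_(w <- Tl | w \in S') F w.
  rewrite -(big_filter Tl); apply: perm_big; apply: uniq_perm => //.
    by apply: filter_uniq; exact: finmap.fset_uniq.
  move=> y; rewrite [RHS]mem_filter; apply/idP/idP => [yS|/andP [] //].
  rewrite yS /= /Tl in_fset_set // mem_set //.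
  by move: yS; rewrite mem_filter => /andP [Py yS]; apply: SA.
rewrite big_mkcond /=; apply: ler_sum => i _; case: ifP => // _.
Qed.

End G3.

Section G4.
Variables (R : realType) (V : choiceType) (nbrs : V -> seq V).
Variables (pi : V -> R) (K : set V).
Hypothesis sym : forall u w, adj nbrs u w = adj nbrs w u.
Hypothesis conn : forall x y, exists n, walk nbrs x y n.
Hypothesis pi_gt0 : forall x, 0 < pi x.

Lemma ball_finite x (r : R) : finite_set (ball_g nbrs x r).
Proof.
set k := Num.bound `|r|.
apply: (@sub_finite_set _ _ [set` reach nbrs k x]); last exact: finite_seq.
move=> y; rewrite /ball_g /= => h.
suff: y \in reach nbrs k x by []. apply: (dist_reach conn).
have := archi_boundP (normr_ge0 r); rewrite -/k => hk.
have : ((dist nbrs x y)%:R < k%:R :> R).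
  by apply: le_lt_trans hk; apply: le_trans h _; apply: ler_norm.
by rewrite ltr_nat => /ltnW.
Qed.

Lemma vol_ge x (r : R) (S : seq V) (P : pred V) : uniq S ->
  (forall w, w \in S -> P w -> (dist nbrs x w)%:R <= r) ->
  \sum_(w <- S | P w) pi w <= vol nbrs pi x r.
Proof.
move=> uS h; apply: fs_lower => //; first exact: ball_finite.
by move=> i; apply: ltW.
Qed.

Lemma volb_ge v (r : R) (S : seq V) (P : pred V) : uniq S ->
  (forall w, w \in S -> P w -> (dist nbrs v w)%:R <= r /\ bdry nbrs K w) ->
  \sum_(w <- S | P w) pi w <= vol_bdry nbrs pi K v r.
Proof.
move=> uS h; apply: fs_lower => //; first by apply: finite_setIl; exact: ball_finite.
by move=> i; apply: ltW.
Qed.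

Lemma vol_pi x (r : R) : 0 <= r -> pi x <= vol nbrs pi x r.
Proof.
move=> r0; have := @vol_ge x r [:: x] predT isT.
rewrite big_cons big_nil addr0; apply => w; rewrite inE => /eqP -> _.
by rewrite dist_xx.
Qed.

Lemma vol_gt0 x (r : R) : 0 <= r -> 0 < vol nbrs pi x r.
Proof. by move=> r0; apply: lt_le_trans (pi_gt0 x) (vol_pi x r0). Qed.

Lemma volb_ge0 v (r : R) : 0 <= vol_bdry nbrs pi K v r.
Proof. by apply: fs_ge0 => i; apply: ltW. Qed.

End G4.
Section G5.
Variables (R : realType) (V : choiceType) (nbrs : V -> seq V).
Variables (mu : V -> V -> R) (pi : V -> R) (c1 c2 c3 c4 : R).
Local Notation kp := (kern_pow nbrs mu pi).
Local Notation vol := (vol nbrs pi).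
Local Notation dist := (dist nbrs).
Hypothesis Hk0 : forall x y, 0 <= kern nbrs mu pi x y.
Hypothesis Hnl : forall x, x \notin nbrs x.
Hypothesis conn : forall x y, exists n, walk nbrs x y n.
Hypothesis pi_gt0 : forall x, 0 < pi x.
Hypothesis c1_gt0 : 0 < c1.
Hypothesis c2_gt0 : 0 < c2.
Hypothesis c3_gt0 : 0 < c3.
Hypothesis c4_gt0 : 0 < c4.
Hypothesis harn : forall (n : nat) x y, (dist x y <= n)%N ->
    c1 / vol x (Num.sqrt n%:R) * expR (- ((dist x y)%:R ^+ 2) / (c2 * n%:R))
      <= heat nbrs mu pi n x y /\
    heat nbrs mu pi n x y <=
      c3 / vol x (Num.sqrt n%:R) * expR (- ((dist x y)%:R ^+ 2) / (c4 * n%:R)).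

Lemma vol_ge0 x r : 0 <= vol x r.
Proof. by apply: fs_ge0 => i; apply: ltW. Qed.

Lemma VB x (r : R) (m : nat) : 0 <= r -> r <= m%:R ->
  vol x r * (c1 / vol x (Num.sqrt m%:R) * expR (- (r ^+ 2) / (c2 * m%:R))) <= 1.
Proof.
move=> r0 rm; rewrite {1}/Defs.vol; have [s [us sA ->]] := fs_repr (ball_g nbrs x r) pi.
rewrite mulr_suml; apply: le_trans (kp_sum_le1 Hk0 Hnl m x us).
rewrite big_seq [X in _ <= X]big_seq; apply: ler_sum => y ys.
have hy : (dist x y)%:R <= r by have := sA y ys.
have dm : (dist x y <= m)%N by rewrite -(ler_nat R); apply: le_trans hy rm.
have [hl _] := harn dm.
have a0 : 0 <= c1 / vol x (Num.sqrt m%:R).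
  by apply: divr_ge0; [apply: ltW|apply: vol_ge0].
have ha : c1 / vol x (Num.sqrt m%:R) * expR (- (r ^+ 2) / (c2 * m%:R)) <= kp m x y / pi y.
  apply: le_trans hl; apply: ler_wpM2l => //; rewrite ler_expR.
  apply: ler_wpM2r; first by rewrite invr_ge0 mulr_ge0 ?ler0n // ltW.
  rewrite lerN2; apply: lerXn2r => //; rewrite ?nnegrE ?ler0n //.
rewrite mulrC -ler_pdivlMr //.
Qed.

Lemma VL x (m : nat) (Ce : R) : 0 <= Ce -> Ce <= kern nbrs mu pi x x ->
  vol x (Num.sqrt m%:R) * Ce ^+ m <= c3 * pi x.
Proof.
move=> C0 Cx; have hd : (dist x x <= m)%N by rewrite dist_xx.
have [_ hu] := harn hd.
rewrite dist_xx /= expr0n /= oppr0 mul0r expR0 mulr1 /heat in hu.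
have Vp : 0 < vol x (Num.sqrt m%:R).
  by apply: (vol_gt0 conn pi_gt0); apply: sqrtr_ge0.
apply: le_trans (_ : vol x (Num.sqrt m%:R) * kp m x x <= _).
  by apply: ler_wpM2l; [apply: ltW | apply: kp_self].
have h1 : kp m x x <= c3 / vol x (Num.sqrt m%:R) * pi x by rewrite -ler_pdivrMr.
apply: le_trans (ler_wpM2l (ltW Vp) h1) _.
rewrite le_eqVlt; apply/orP; left; apply/eqP; field.
exact: lt0r_neq0.
Qed.

End G5.
Section G6.
Variable R : realType.

Lemma geo_sum N : \sum_(k < N) (2^-1 : R) ^+ k <= 2.
Proof.
suff h : \sum_(k < N) (2^-1 : R) ^+ k + 2 * (2^-1) ^+ N = 2.
  rewrite -[X in _ <= X]h lerDl; apply: mulr_ge0 => //; apply: exprn_ge0; by rewrite invr_ge0.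
elim: N => [|N IH]; first by rewrite big_ord0 expr0 add0r mulr1.
rewrite big_ord_recr /= -[RHS]IH -addrA; congr (_ + _).
by rewrite exprS; field.
Qed.

Lemma expbnd (cc D1 : R) : 0 < cc -> 1 <= D1 -> exists Bc : R, 1 <= Bc /\
  forall k : nat, (2 * D1) ^+ k * expR (- (((2:R) ^+ k) ^+ 2 / (16 * cc))) <= Bc.
Proof.
move=> cc0 D10.
have D0 : 0 <= 2 * D1 by apply: mulr_ge0 => //; apply: le_trans D10.
set m := Num.bound (2 * D1).
have hm := archi_boundP D0; rewrite -/m in hm.
have h4 : 2 * D1 <= (4:R) ^+ m.+1.
  apply: le_trans (ltW hm) _; rewrite -natrX ler_nat.
  apply: leq_trans (ltnW (ltn_expl m (isT : 1 < 4)%N)) _.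
  by rewrite expnS leq_pmull // expn_gt0.
exists (1 + (m.+1)`!%:R * (16 * cc) ^+ m.+1); split.
  by rewrite lerDl; apply: mulr_ge0; [apply: ler0n | apply: exprn_ge0; apply: mulr_ge0 => //; apply: ltW].
move=> k; set q := ((2:R) ^+ k) ^+ 2 / (16 * cc).
have q0 : 0 <= q by apply: divr_ge0; [apply: exprn_ge0; apply: exprn_ge0 | apply: mulr_ge0 => //; apply: ltW].
have he := expR_ge1Dxn m q0.
rewrite expRN -ler_pdivlMr ?invr_gt0 ?expR_gt0 // invrK.
have fpos : 0 < (m.+1)`!%:R :> R by rewrite ltr0n fact_gt0.
apply: le_trans (_ : (4 ^+ m.+1) ^+ k <= _).
  by apply: lerXn2r => //; rewrite nnegrE // exprn_ge0.
apply: le_trans (_ : (m.+1)`!%:R * (16 * cc) ^+ m.+1 * (q ^+ m.+1 / (m.+1)`!%:R) <= _).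
  rewrite le_eqVlt; apply/orP; left; apply/eqP.
  rewrite /q expr_div_n -!exprM mulnC exprM [in RHS]exprM.
  have e4 : (2:R) ^+ 2 = 4 by rewrite -natrX.
  rewrite [(k * 2)%N]mulnC exprM e4; field.
  apply/andP; split; first exact: lt0r_neq0.
  by apply: expf_neq0; apply: lt0r_neq0; apply: mulr_gt0.
have X0 : 0 <= q ^+ m.+1 / (m.+1)`!%:R by apply: divr_ge0; [apply: exprn_ge0 | apply: ltW].
have FP0 : 0 <= (m.+1)`!%:R * (16 * cc) ^+ m.+1.
  by apply: mulr_ge0; [apply: ltW | apply: exprn_ge0; apply: mulr_ge0 => //; apply: ltW].
apply: le_trans (_ : (1 + (m.+1)`!%:R * (16 * cc) ^+ m.+1) * (q ^+ m.+1 / (m.+1)`!%:R) <= _).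
  by apply: ler_wpM2r => //; rewrite lerDr.
apply: ler_wpM2l; first by apply: addr_ge0.
by apply: le_trans he; apply: ler_wpDl.
Qed.

End G6.
Section G7.
Variable R : realType.

Lemma ann (cc nn rho Bc D1 : R) : 0 < cc -> 0 < nn -> 0 <= rho -> nn <= rho ^+ 2 ->
  1 <= Bc -> 1 <= D1 ->
  (forall k : nat, (2 * D1) ^+ k * expR (- (((2:R) ^+ k) ^+ 2 / (16 * cc))) <= Bc) ->
  forall (N : nat) (s r : R), 0 <= s -> s <= 2 * r -> s <= 2 ^+ N * rho ->
  expR (- (r ^+ 2) / (cc * nn)) <=
    \sum_(k < N.+1) Bc / (2 * D1) ^+ k * ((s <= 2 ^+ k * rho)%R)%:R.
Proof.
move=> cc0 nn0 rho0 nnrho Bc1 D11 HB.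
have D0 : 0 < 2 * D1 by apply: mulr_gt0 => //; apply: lt_le_trans D11.
have a0 k : 0 <= Bc / (2 * D1) ^+ k.
  by apply: divr_ge0; [apply: le_trans Bc1 | apply: exprn_ge0; apply: ltW].
have e0 r : expR (- (r ^+ 2) / (cc * nn)) <= 1.
  rewrite expR_le1 mulNr oppr_le0; apply: divr_ge0; first exact: sqr_ge0.
  by apply: mulr_ge0; apply: ltW.
elim => [|N IH] s r s0 s2r sN.
  rewrite big_ord_recl big_ord0 addr0 /= expr0 divr1.
  by rewrite expr0 in sN; rewrite sN mulr1; apply: le_trans (e0 r) Bc1.
rewrite big_ord_recr /=.
case: (lerP s (2 ^+ N * rho)) => hs.
  apply: le_trans (IH s r s0 s2r hs) _; rewrite lerDl; apply: mulr_ge0 => //.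
rewrite sN mulr1; apply: ler_wpDl.
  by apply: sumr_ge0 => i _; apply: mulr_ge0 => //; apply: ler0n.
have t0 : 0 <= (2:R) ^+ N by apply: exprn_ge0.
have key : ((2:R) ^+ N) ^+ 2 * nn <= 4 * r ^+ 2.
  apply: le_trans (_ : ((2:R) ^+ N * rho) ^+ 2 <= _).
    by rewrite exprMn; apply: ler_wpM2l => //; apply: exprn_ge0.
  have -> : 4 * r ^+ 2 = (2 * r) ^+ 2 by rewrite exprMn -natrX.
  apply: lerXn2r; rewrite ?nnegrE; [by apply: mulr_ge0| | ].
    by apply: le_trans s2r; apply: le_trans s0.
  by apply: le_trans s2r; apply: ltW.
have hq : ((2:R) ^+ N.+1) ^+ 2 / (16 * cc) <= r ^+ 2 / (cc * nn).
  rewrite ler_pdivrMr; last by apply: mulr_gt0.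
  have -> : r ^+ 2 / (cc * nn) * (16 * cc) = 4 * (4 * r ^+ 2) / nn.
    by field; apply/andP; split; apply: lt0r_neq0.
  rewrite ler_pdivlMr // [(2:R) ^+ N.+1]exprS exprMn.
  have -> : 2 ^+ 2 * ((2:R) ^+ N) ^+ 2 * nn = 4 * (((2:R) ^+ N) ^+ 2 * nn) by rewrite -natrX mulrA.
  by apply: ler_wpM2l.
apply: le_trans (_ : expR (- (((2:R) ^+ N.+1) ^+ 2 / (16 * cc))) <= _).
  by rewrite ler_expR !mulNr lerN2.
by rewrite ler_pdivlMr ?exprn_gt0 // mulrC.
Qed.

End G7.

From mathcomp Require Import zify.
Section G8.
Variables (R : realType) (V : choiceType) (nbrs : V -> seq V).
Variables (mu : V -> V -> R) (pi : V -> R) (c1 c2 c3 c4 Ce : R).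
Local Notation kp := (kern_pow nbrs mu pi).
Local Notation vol := (vol nbrs pi).
Local Notation dist := (dist nbrs).
Hypothesis Hk0 : forall x y, 0 <= kern nbrs mu pi x y.
Hypothesis Hnl : forall x, x \notin nbrs x.
Hypothesis conn : forall x y, exists n, walk nbrs x y n.
Hypothesis pi_gt0 : forall x, 0 < pi x.
Hypothesis c1_gt0 : 0 < c1.
Hypothesis c2_gt0 : 0 < c2.
Hypothesis c3_gt0 : 0 < c3.
Hypothesis c4_gt0 : 0 < c4.
Hypothesis Ce_gt0 : 0 < Ce.
Hypothesis Ce_le1 : Ce <= 1.
Hypothesis lazy : forall x, Ce <= kern nbrs mu pi x x.
Hypothesis harn : forall (n : nat) x y, (dist x y <= n)%N ->
    c1 / vol x (Num.sqrt n%:R) * expR (- ((dist x y)%:R ^+ 2) / (c2 * n%:R))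
      <= heat nbrs mu pi n x y /\
    heat nbrs mu pi n x y <=
      c3 / vol x (Num.sqrt n%:R) * expR (- ((dist x y)%:R ^+ 2) / (c4 * n%:R)).

Lemma sqrt_le (a b : R) : 0 <= b -> a <= b ^+ 2 -> Num.sqrt a <= b.
Proof.
move=> b0 h; have e : Num.sqrt (b ^+ 2) = b by rewrite sqrtr_sqr ger0_norm.
apply: le_trans (_ : Num.sqrt (b ^+ 2) <= b); last by rewrite e.
by rewrite ler_sqrt // sqr_ge0.
Qed.

Let VB' := VB Hk0 Hnl pi_gt0 c1_gt0 c2_gt0 harn.
Let VL' := VL Hk0 conn pi_gt0 harn.
Let vgt0 := vol_gt0 conn pi_gt0.

Variable j : nat.
Hypothesis j2 : (2 <= j)%N.
Hypothesis jc : 2 * c4 <= c2 * j%:R.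

Definition Mj := expR (j%:R / c2) / c1 + c3 / Ce ^+ (j * j).
Definition MM := Mj / (c1 * expR (- (1 / (c2 * j%:R)))).

Lemma Mj_ge0 : 0 <= Mj.
Proof.
apply: addr_ge0; apply: divr_ge0.
- exact: expR_ge0.
- exact: ltW.
- exact: ltW.
- by apply: exprn_ge0; apply: ltW.
Qed.

Lemma step3 x (n : nat) : (1 <= n)%N ->
  vol x (Num.sqrt (j * n)%:R) <= Mj * vol x (Num.sqrt n%:R).
Proof.
move=> n1.
have Vn : 0 < vol x (Num.sqrt n%:R) by apply: vgt0; apply: sqrtr_ge0.
case: (leqP j n) => jn.
  have h : Num.sqrt (j * n)%:R <= n%:R :> R.
    apply: sqrt_le; first exact: ler0n.
    by rewrite -natrX ler_nat; nia.
  have := VB' x (sqrtr_ge0 _) h.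
  rewrite sqr_sqrtr ?ler0n //.
  have -> : - ((j * n)%:R) / (c2 * n%:R) = - (j%:R / c2) :> R.
    by rewrite natrM; field; apply/andP; split; [apply: lt0r_neq0 | rewrite pnatr_eq0 -lt0n].
  move=> hv; apply: le_trans (_ : expR (j%:R / c2) / c1 * vol x (Num.sqrt n%:R) <= _).
    have ap : 0 < c1 / vol x (Num.sqrt n%:R) * expR (-(j%:R / c2)).
      by apply: mulr_gt0; [apply: divr_gt0 | apply: expR_gt0].
    have -> : expR (j%:R / c2) / c1 * vol x (Num.sqrt n%:R) =
        1 / (c1 / vol x (Num.sqrt n%:R) * expR (-(j%:R / c2))).
      rewrite expRN; field.
      by rewrite !lt0r_neq0 ?expR_gt0.
    by rewrite ler_pdivlMr.
  apply: ler_wpM2r; first exact: ltW.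
  by rewrite /Mj lerDl; apply: divr_ge0; [apply: ltW | apply: exprn_ge0; apply: ltW].
have := VL' (j * n) (ltW Ce_gt0) (lazy x).
have hp := vol_pi conn pi_gt0 x (sqrtr_ge0 n%:R).
have hc : Ce ^+ (j * j) <= Ce ^+ (j * n).
  by apply: ler_wiXn2l => //; [apply: ltW | rewrite leq_mul2l ltnW ?orbT].
have Cp : 0 < Ce ^+ (j * j) by apply: exprn_gt0.
move=> h; apply: le_trans (_ : c3 / Ce ^+ (j * j) * vol x (Num.sqrt n%:R) <= _).
  rewrite mulrAC ler_pdivlMr //; apply: le_trans (_ : vol x (Num.sqrt (j * n)%:R) * Ce ^+ (j * n) <= _).
    by apply: ler_wpM2l => //; apply: vol_ge0.
  by apply: le_trans h _; apply: ler_wpM2l => //; apply: ltW.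
apply: ler_wpM2r; first exact: ltW.
by rewrite /Mj lerDr; apply: divr_ge0; [apply: expR_ge0 | apply: ltW].
Qed.

Lemma volcmp x (n d : nat) : (1 <= n)%N -> (d <= n)%N ->
  vol x (Num.sqrt (n + d ^ 2)%:R) * expR (- ((d%:R) ^+ 2) / ((2 * c4) * n%:R))
    <= MM * vol x (Num.sqrt n%:R).
Proof.
move=> n1 dn.
set rho := Num.sqrt (n + d ^ 2)%:R.
set E := expR (- ((d%:R) ^+ 2) / ((2 * c4) * n%:R)).
set V1 := vol x (Num.sqrt (j * n)%:R).
have hr : rho <= (j * n)%:R.
  apply: sqrt_le; first exact: ler0n.
  rewrite -natrX ler_nat -!mulnn.
  have : (d * d <= n * n)%N by apply: leq_mul.
  have hjn : (2 * n <= j * n)%N by rewrite leq_mul2r j2 orbT.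
  have h4 : (2 * n * (2 * n) <= j * n * (j * n))%N by apply: leq_mul.
  have hnn : (n <= n * n)%N by rewrite leq_pmulr.
  by lia.
have hv := VB' x (sqrtr_ge0 _) hr.
rewrite sqr_sqrtr ?ler0n // in hv.
have V1p : 0 < V1 by apply: vgt0; apply: sqrtr_ge0.
have Vrp : 0 < vol x rho by apply: vgt0; apply: sqrtr_ge0.
have np : 0 < n%:R :> R by rewrite ltr0n.
have jp : 0 < j%:R :> R by rewrite ltr0n; apply: leq_trans j2.
set X := expR (- (n + d ^ 2)%:R / (c2 * (j * n)%:R)).
have h1 : vol x rho * (c1 * X) <= V1.
  have e2 : vol x rho * (c1 / V1 * X) = (vol x rho * (c1 * X)) / V1.
    by field; apply: lt0r_neq0.
  by rewrite e2 ler_pdivrMr // mul1r in hv.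
have hexp : expR (- (1 / (c2 * j%:R))) * E <= X.
  rewrite /E /X -expRD ler_expR.
  have -> : - (n + d ^ 2)%:R / (c2 * (j * n)%:R) =
      - (1 / (c2 * j%:R)) + - (d%:R ^+ 2 / (c2 * j%:R * n%:R)) :> R.
    rewrite natrD natrX natrM; field.
    by rewrite !lt0r_neq0.
  rewrite lerD2l mulNr lerN2; apply: ler_wpM2l; first exact: sqr_ge0.
  rewrite lef_pV2 ?posrE; last by apply: mulr_gt0 => //; apply: mulr_gt0.
    by apply: ler_wpM2r; [apply: ltW|].
  by apply: mulr_gt0 => //; apply: mulr_gt0.
have Kp : 0 < c1 * expR (- (1 / (c2 * j%:R))) by apply: mulr_gt0; rewrite ?expR_gt0.
rewrite /MM mulrAC ler_pdivlMr //.
apply: le_trans (step3 x n1).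
apply: le_trans h1.
have -> : vol x rho * E * (c1 * expR (- (1 / (c2 * j%:R)))) =
   vol x rho * (c1 * (expR (- (1 / (c2 * j%:R))) * E)) by ring.
apply: ler_wpM2l; first exact: ltW.
by apply: ler_wpM2l; first exact: ltW.
Qed.

Variable K : set V.
Hypothesis sym : forall u w, adj nbrs u w = adj nbrs w u.
Local Notation Vb := (vol_bdry nbrs pi K).
Local Notation B := (fun z => `[< bdry nbrs K z >]).

Lemma dbl_iter (D : R) v (rho : R) :
  (forall (z : V) (r : R), bdry nbrs K z -> 0 < r -> Vb z (2 * r) <= D * Vb z r) ->
  0 < D -> bdry nbrs K v -> 0 < rho ->
  forall k : nat, Vb v (2 ^+ k * rho) <= D ^+ k * Vb v rho.
Proof.
move=> dbl Dp hv rp; elim => [|k IH]; first by rewrite !expr0 !mul1r.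
rewrite exprS -mulrA; apply: le_trans (dbl _ _ hv _) _.
  by apply: mulr_gt0 => //; apply: exprn_gt0.
by rewrite exprS -mulrA; apply: ler_wpM2l => //; apply: ltW.
Qed.

Lemma sumb (D Bc : R) x v (n : nat) :
  (forall (z : V) (r : R), bdry nbrs K z -> 0 < r -> Vb z (2 * r) <= D * Vb z r) ->
  0 < D -> 1 <= Bc ->
  (forall k : nat, (2 * (D + 1)) ^+ k * expR (- (((2:R) ^+ k) ^+ 2 / (16 * (2 * c4)))) <= Bc) ->
  ~ K x -> bdry nbrs K v -> (forall k, K k -> (dist x v <= dist x k)%N) ->
  (1 <= n)%N -> (dist x v <= n)%N ->
  fb nbrs mu pi B n x <=
    c3 / vol x (Num.sqrt n%:R) * expR (- (((dist x v)%:R) ^+ 2) / ((2 * c4) * n%:R)) *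
    (2 * Bc * Vb v (Num.sqrt (n + dist x v ^ 2)%:R)).
Proof.
move=> dbl Dp Bc1 HB nKx hv hmin n1 dn.
set d := dist x v.
set rho := Num.sqrt (n + d ^ 2)%:R.
set E := expR (- (d%:R ^+ 2) / ((2 * c4) * n%:R)).
set P := c3 / vol x (Num.sqrt n%:R) * E.
set L := undup (reach nbrs n x).
have uL : uniq L by apply: undup_uniq.
have np : 0 < n%:R :> R by rewrite ltr0n.
have cc0 : 0 < 2 * c4 by apply: mulr_gt0.
have rho1 : 1 <= rho.
  rewrite -sqrtr1 ler_sqrt ?ler0n // ler1n; apply: leq_trans n1 (leq_addr _ _).
have rho0 : 0 < rho by apply: lt_le_trans rho1.
have nrho : n%:R <= rho ^+ 2 by rewrite sqr_sqrtr ?ler0n // ler_nat leq_addr.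
have Vnp : 0 < vol x (Num.sqrt n%:R) by apply: vgt0; apply: sqrtr_ge0.
have P0 : 0 <= P by apply: mulr_ge0; [apply: divr_ge0; apply: ltW | apply: expR_ge0].
have D11 : 1 <= D + 1 by rewrite lerDr ltW.
set a := fun k : nat => Bc / (2 * (D + 1)) ^+ k.
set ind := fun (k : nat) (w : V) => ((((dist v w)%:R <= 2 ^+ k * rho)%R)%:R : R).
rewrite (fb_eq mu pi B (L := L)) //; last by move=> w; rewrite mem_undup.
apply: le_trans (_ : \sum_(w <- L) P * (pi w * (B w)%:R * \sum_(k < (2 * n).+1) a k * ind k w) <= _).
  rewrite big_seq [X in _ <= X]big_seq; apply: ler_sum => w wL.
  case: (boolP (B w)) => [/asboolP bw|bw]; last first.
    by rewrite mulr0n !(mulr0, mul0r).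
  rewrite mulr1n !mulr1.
  have Kw : K w by case: bw.
  have wr : (dist x w <= n)%N by apply: reach_dist; rewrite -mem_undup.
  set r := dist x w.
  have dr : (d <= r)%N by apply: hmin.
  have vw : (dist v w <= 2 * r)%N.
    apply: leq_trans (dist_tri conn v x w) _; rewrite (dist_sym sym conn v x) -/d.
    by rewrite mul2n -addnn leq_add2r.
  have [_ hu] := harn wr.
  have kpe : kp n x w = heat nbrs mu pi n x w * pi w.
    by rewrite /heat mulfVK //; apply: lt0r_neq0.
  rewrite kpe; apply: le_trans (ler_wpM2r (ltW (pi_gt0 w)) hu) _.
  apply: le_trans (_ : (c3 / vol x (Num.sqrt n%:R) * pi w) *
     (E * \sum_(k < (2 * n).+1) a k * ind k w) <= _); last first.
    by rewrite /P le_eqVlt; apply/orP; left; apply/eqP; ring.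
  rewrite mulrAC; apply: ler_wpM2l.
    by apply: mulr_ge0; [apply: divr_ge0; apply: ltW | apply: ltW].
  apply: le_trans (_ : E * expR (- (r%:R ^+ 2) / ((2 * c4) * n%:R)) <= _).
    rewrite /E -expRD ler_expR.
    have -> : - (r%:R ^+ 2) / (c4 * n%:R) =
        - (r%:R ^+ 2) / ((2 * c4) * n%:R) + - (r%:R ^+ 2) / ((2 * c4) * n%:R) :> R.
      by field; apply/andP; split; apply: lt0r_neq0.
    rewrite lerD2r !mulNr lerN2; apply: ler_wpM2r.
      by rewrite invr_ge0; apply: mulr_ge0; apply: ltW.
    by rewrite -!natrX ler_nat leq_exp2r.
  apply: ler_wpM2l; first exact: expR_ge0.
  apply: (ann cc0 np (ltW rho0) nrho Bc1 D11 HB).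
  - exact: ler0n.
  - by apply: le_trans (_ : (2 * r)%:R <= _); [rewrite ler_nat | rewrite natrM].
  - apply: le_trans (_ : (2 ^+ (2 * n) : R) <= _); last first.
      by rewrite -[X in X <= _]mulr1; apply: ler_wpM2l => //; apply: exprn_ge0.
    rewrite -natrX ler_nat; apply: leq_trans vw _; apply: leq_trans (_ : 2 * n <= _)%N.
      by rewrite leq_mul2l.
    by apply: ltnW; apply: ltn_expl.
have e1 : \sum_(w <- L) P * (pi w * (B w)%:R * \sum_(k < (2 * n).+1) a k * ind k w) =
    P * \sum_(k < (2 * n).+1) a k * \sum_(w <- L | B w && ((dist v w)%:R <= 2 ^+ k * rho)%R) pi w.
  rewrite -mulr_sumr; congr (P * _).
  rewrite (eq_bigr (fun w => \sum_(k < (2 * n).+1) a k * (pi w * (B w)%:R * ind k w))); last first.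
    by move=> w _; rewrite mulr_sumr; apply: eq_bigr => k _; ring.
  rewrite exchange_big /=; apply: eq_bigr => k _; rewrite -mulr_sumr; congr (_ * _).
  rewrite [RHS]big_mkcond /=; apply: eq_bigr => w _.
  by rewrite /ind; case: (B w); case: (_ <= _)%R; rewrite /= ?mulr1 ?mulr0.
rewrite e1; apply: ler_wpM2l => //.
apply: le_trans (_ : \sum_(k < (2 * n).+1) a k * (D ^+ k * Vb v rho) <= _).
  apply: ler_sum => k _; apply: ler_wpM2l.
    by apply: divr_ge0; [apply: le_trans Bc1 | apply: exprn_ge0; apply: mulr_ge0 => //; apply: addr_ge0 => //; apply: ltW].
  apply: le_trans (dbl_iter dbl Dp hv rho0 k).
  apply: (volb_ge conn pi_gt0) => // w _ /andP [/asboolP bw hw]; split => //.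
apply: le_trans (_ : \sum_(k < (2 * n).+1) Bc * ((2^-1) ^+ k * Vb v rho) <= _).
  apply: ler_sum => k _; rewrite mulrA mulrA; apply: ler_wpM2r; first exact: volb_ge0.
  rewrite /a mulrAC -mulrA; apply: ler_wpM2l; first by apply: le_trans Bc1.
  rewrite -expr_div_n; apply: lerXn2r; rewrite ?nnegrE.
  - by apply: divr_ge0; [apply: ltW | apply: mulr_ge0 => //; apply: le_trans D11].
  - by rewrite invr_ge0.
  rewrite ler_pdivrMr; last by apply: mulr_gt0 => //; apply: lt_le_trans D11.
  by rewrite mulrA mulVf // mul1r lerDl.
rewrite -mulr_sumr -mulr_suml mulrCA mulrA [2 * Bc]mulrC -mulrA.
apply: le_trans (_ : 2 * (Bc * Vb v rho) <= _).
  apply: ler_wpM2r; last exact: geo_sum.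
  by apply: mulr_ge0; [apply: le_trans Bc1 | apply: volb_ge0].
by rewrite le_eqVlt; apply/orP; left; apply/eqP; ring.
Qed.

Lemma pern (D Bc : R) x v (n : nat) :
  (forall (z : V) (r : R), bdry nbrs K z -> 0 < r -> Vb z (2 * r) <= D * Vb z r) ->
  0 < D -> 1 <= Bc ->
  (forall k : nat, (2 * (D + 1)) ^+ k * expR (- (((2:R) ^+ k) ^+ 2 / (16 * (2 * c4)))) <= Bc) ->
  ~ K x -> bdry nbrs K v -> (forall k, K k -> (dist x v <= dist x k)%N) ->
  (1 <= n)%N ->
  fb nbrs mu pi B n x <=
    c3 * MM * (2 * Bc) * Vb v (Num.sqrt (n + dist x v ^ 2)%:R)
      / vol x (Num.sqrt (n + dist x v ^ 2)%:R).
Proof.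
move=> dbl Dp Bc1 HB nKx hv hmin n1.
set rho := Num.sqrt (n + dist x v ^ 2)%:R.
have Vrp : 0 < vol x rho by apply: vgt0; apply: sqrtr_ge0.
have Vnp : 0 < vol x (Num.sqrt n%:R) by apply: vgt0; apply: sqrtr_ge0.
have MM0 : 0 <= MM.
  apply: divr_ge0; first exact: Mj_ge0.
  by apply: mulr_ge0; [apply: ltW | apply: expR_ge0].
have Bc0 : 0 <= Bc by apply: le_trans Bc1.
case: (leqP (dist x v) n) => dn; last first.
  rewrite (fb_eq mu pi B (L := undup (reach nbrs n x))) ?undup_uniq //; last first.
    by move=> w; rewrite mem_undup.
  rewrite big1_seq; last first.
    move=> w /andP [_ wL].
    case: (boolP `[< bdry nbrs K w >]) => [/asboolP bw|bw]; last by rewrite mulr0n mulr0.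
    exfalso.
    have h2 := hmin w (proj1 bw).
    have h1 : (dist x w <= n)%N by apply: reach_dist; rewrite -mem_undup.
    by have := leq_trans h2 h1; rewrite leqNgt dn.
  apply: divr_ge0; last exact: ltW.
  apply: mulr_ge0; last exact: volb_ge0.
  by apply: mulr_ge0; [apply: mulr_ge0; [apply: ltW|]|apply: mulr_ge0].
apply: le_trans (sumb dbl Dp Bc1 HB nKx hv hmin n1 dn) _.
have hv2 := volcmp x n1 dn; rewrite -/rho in hv2.
set E := expR _ in hv2 *.
have E0 : 0 <= E by apply: expR_ge0.
have hP : c3 / vol x (Num.sqrt n%:R) * E <= c3 * MM / vol x rho.
  have e1 : c3 / vol x (Num.sqrt n%:R) * E =
      (c3 * (vol x rho * E)) / (vol x (Num.sqrt n%:R) * vol x rho).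
    by field; apply/andP; split; apply: lt0r_neq0.
  have e2 : c3 * MM / vol x rho =
      (c3 * (MM * vol x (Num.sqrt n%:R))) / (vol x (Num.sqrt n%:R) * vol x rho).
    by field; apply/andP; split; apply: lt0r_neq0.
  rewrite e1 e2; apply: ler_wpM2r.
    by rewrite invr_ge0; apply: mulr_ge0; apply: ltW.
  by apply: ler_wpM2l; first exact: ltW.
apply: le_trans (ler_wpM2r _ hP) _.
  by apply: mulr_ge0; [apply: mulr_ge0 => //| apply: volb_ge0].
by rewrite le_eqVlt; apply/orP; left; apply/eqP; field; apply: lt0r_neq0.
Qed.

End G8.

Unset Implicit Arguments. Set Strict Implicit.
Theorem corollary2p11 (R : realType) (V : choiceType) (nbrs : V -> seq V)
  (mu : V -> V -> R) (pi : V -> R) (K : set V) :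
  ~ finite_set [set: V] ->
  simple_graph nbrs ->
  connected_graph nbrs ->
  weights_ok nbrs mu pi ->
  controlled nbrs mu pi ->
  uniformly_lazy nbrs mu pi ->
  harnack nbrs mu pi ->
  (exists D : R, 0 < D /\ forall (z : V) (r : R), bdry nbrs K z -> 0 < r ->
     vol_bdry nbrs pi K z (2 * r) <= D * vol_bdry nbrs pi K z r) ->
  exists C : R, forall x v : V,
    in_Gamma K x -> ~ inner_bdry nbrs K x ->
    bdry nbrs K v -> (forall k, K k -> (dist nbrs x v <= dist nbrs x k)%N) ->
    ((psiK nbrs mu pi K x)%:E <=
      \sum_((dist nbrs x v) ^ 2 <= n <oo)
         (C / Wtilde nbrs pi K x v (Num.sqrt n%:R))%:E)%E.
Proof.
move=> _ [_ [Hnl0 Hsym]] conn [_ [Hmu0 [Hpi _]]] [Cc [Cc1 Hc]] [Ce [/andP [Ce0 Ce1] Hl]].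
move=> [c1 [c2 [c3 [c4 [[c10 c20 c30 c40] harn]]]]] [D [Dp dbl]].
have Hnl : forall x, x \notin nbrs x by move=> x; exact: Hnl0 x.
have Hk0 : forall x y, 0 <= kern nbrs mu pi x y.
  move=> x y; case: (eqVneq y x) => [->|yx]; first by apply: le_trans (ltW Ce0) (Hl x).
  rewrite /kern (negbTE yx); case: (boolP (adj nbrs x y)) => a.
    apply: le_trans _ (Hc x y a); apply: divr_ge0 => //; apply: le_trans (ltW Cc1); exact: ler01.
  have -> : mu x y = 0.
    by apply/eqP; apply: contraNT a => h; apply/(proj1 (Hmu0 x y)).
  by rewrite mul0r.
set j := (Num.bound (2 * c4 / c2)).+2.
have j2 : (2 <= j)%N by [].
have jc : 2 * c4 <= c2 * j%:R.
  have h0 : 0 <= 2 * c4 / c2 by apply: divr_ge0; apply: ltW => //; apply: mulr_gt0.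
  have := archi_boundP h0; rewrite ltr_pdivrMr // => h.
  apply: le_trans (ltW h) _; rewrite mulrC; apply: ler_wpM2l; first exact: ltW.
  by rewrite ler_nat /j; apply: leq_trans (leqnSn _) (leqnSn _).
have cc0 : 0 < 2 * c4 by apply: mulr_gt0.
have D11 : 1 <= D + 1 by rewrite lerDr ltW.
have [Bc [Bc1 HB]] := expbnd cc0 D11.
set C := c3 * MM c1 c2 c3 Ce j * (2 * Bc).
exists C => x v Gx _ hv hmin.
have Ce1' : Ce <= 1 := ltW Ce1.
have MM0 : 0 <= MM c1 c2 c3 Ce j.
  apply: divr_ge0; first exact: Mj_ge0.
  by apply: mulr_ge0; [apply: ltW | apply: expR_ge0].
have C0 : 0 <= C.
  apply: mulr_ge0; first by apply: mulr_ge0 => //; apply: ltW.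
  by apply: mulr_ge0 => //; apply: le_trans Bc1.
set d := dist nbrs x v.
set t := fun i : nat => C / Wtilde nbrs pi K x v (Num.sqrt i%:R).
have t0 i : 0 <= t i.
  apply: divr_ge0 => //; apply: divr_ge0; first exact: vol_ge0.
  exact: volb_ge0.
have key m : hit_by nbrs mu pi K m x <= \sum_(d ^ 2 <= i < d ^ 2 + m.+1) t i.
  apply: le_trans (hit_fb Hk0 Hsym m (B := fun z => `[< bdry nbrs K z >]) erefl _) _.
    by move=> Kx; exfalso; apply: Gx.
  have -> : \sum_(d ^ 2 <= i < d ^ 2 + m.+1) t i = \sum_(i < m.+1) t (i + d ^ 2)%N.
    by rewrite -{1}[(d ^ 2)%N]add0n big_addn addKn big_mkord.
  apply: ler_sum => i _.
  case: (posnP i) => [->|i1].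
    rewrite /=; have -> : `[< bdry nbrs K x >] = false.
      by apply/asboolP => -[Kx _]; apply: Gx.
    by rewrite mulr0n.
  apply: le_trans (pern Hk0 Hnl conn Hpi c10 c20 c30 c40 Ce0 Ce1' Hl harn j2 jc Hsym dbl Dp Bc1 HB Gx hv hmin i1) _.
  rewrite /t /Wtilde invf_div addnC le_eqVlt; apply/orP; left; apply/eqP.
  by rewrite /C; ring.
have key2 m : ((hit_by nbrs mu pi K m x)%:E <= \sum_(d ^ 2 <= n <oo) (t n)%:E)%E.
  apply: le_trans (_ : ((\sum_(d ^ 2 <= i < d ^ 2 + m.+1) t i)%:E <= _)%E).
    by rewrite lee_fin.
  rewrite -sumEFin; apply: nneseries_lim_ge.
  by move=> n0 _ _; rewrite lee_fin.
have S0 : (0 <= \sum_(d ^ 2 <= n <oo) (t n)%:E)%E.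
  by apply: nneseries_ge0 => n0 _ _; rewrite lee_fin.
move: key2 S0; rewrite /psiK.
case: (\sum_(d ^ 2 <= n <oo) (t n)%:E)%E => [s| |] key2 S0; last by [].
  rewrite lee_fin; apply: ge_sup; first by exists (hit_by nbrs mu pi K 0 x); exists 0%N.
  by move=> y [n _ <-]; have := key2 n; rewrite lee_fin.
exact: leey.
Qed.
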